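(* Let $D$ be a finite digraph and $k$ a positive integer. The cop player has a winning strategy with $k$ cops in the lift-free cops-and-robber game on $D$ if and only if $\mathrm{ddp}(D) \le k$.
   Context: A reachable fragment of a digraph $D$ is a vertex set $R\subseteq V(D)$, maximal by inclusion, that contains a vertex $s$ (a source) from which every vertex of $R$ is reachable by a directed path in $D$; it is regarded as the induced subdigraph $D[R]$. The DAG-depth $\mathrm{ddp}(D)$ is defined recursively: $\mathrm{ddp}(D)=1$ if $|V(D)|=1$; if $D$ has exactly one reachable fragment and $|V(D)|>1$, then $\mathrm{ddp}(D)=1+\min_{v\in V(D)}\mathrm{ddp}(D-v)$; otherwise, if $R_1,\dots,R_p$ ($p\ge 2$) are the reachable fragments of $D$, $\mathrm{ddp}(D)=\max_{1\le i\le p}\mathrm{ddp}(D[R_i])$. Lift-free cops-and-robber game on a digraph $D$ with $k$ cops: the robber occupies a vertex, chosen at the start, and knows the cops' positions; the cop player knows the robber's position. In each turn the cop player announces a vertex on which a new cop will be placed; before the cop lands, the robber may move arbitrarily far along directed paths of $D$ (respecting edge directions) that avoid vertices already occupied by cops. Once placed, a cop never leaves its vertex. The robber is caught when a cop is placed on the robber's current vertex (equivalently, the robber stands on a vertex $v$ such that $v$ and all vertices of $N^+_D(v)$ are occupied by cops). The cop player wins if the robber is caught before the $k$ cops are used up; otherwise the robber wins. *)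

(* Defs.v *)
From mathcomp Require Import all_boot.
Set Implicit Arguments. Unset Strict Implicit. Unset Printing Implicit Defensive.

Section Digraph.
Variables (T : finType) (e : rel T).

Definition reachIn (S : {set T}) (x y : T) : bool :=
  connect [rel a b | [&& a \in S, b \in S & e a b]] x y.

Definition rooted_in (S R : {set T}) : bool :=
  (R \subset S) && [exists s in R, R \subset [set y | reachIn S s y]].

Definition is_fragment (S R : {set T}) : bool :=
  rooted_in S R &&
  [forall R' : {set T}, (rooted_in S R' && (R \subset R')) ==> (R' == R)].

Definition fragments (S : {set T}) : {set {set T}} :=
  [set R | is_fragment S R].

(* DAG-depth of D[S], by recursion with fuel (fuel #|S| suffices: deleted
   vertices and, when there are >= 2 fragments, fragments are proper subsets).
   The minimum in the one-fragment case ranges over the nonempty set S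
   (since #|S| > 1), so the neutral element of minn is irrelevant. *)
Fixpoint ddp_aux (n : nat) (S : {set T}) : nat :=
  match n with
  | 0 => 0
  | n'.+1 =>
      if #|S| <= 1 then #|S|
      else if #|fragments S| == 1 then
        (\big[minn/#|S|]_(v in S) ddp_aux n' (S :\ v)).+1
      else \max_(R in fragments S) ddp_aux n' R
  end.

Definition ddp_set (S : {set T}) : nat := ddp_aux #|S| S.

Definition ddp : nat := ddp_set [set: T].

Definition robber_reach (C : {set T}) (x y : T) : bool :=
  connect [rel a b | [&& a \notin C, b \notin C & e a b]] x y.

(* In each turn the
   cop player announces c (knowing C and r); the robber then moves to any r'
   reachable from r avoiding C; the cop lands on c, catching the robber iff
   c = r'.  Existential choices are made independently at each node of the
   game tree, so this is exactly existence of a (history-dependent) winning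
   strategy. *)
Fixpoint cops_win (k : nat) (C : {set T}) (r : T) : Prop :=
  match k with
  | 0 => False
  | k'.+1 => exists c : T, forall r' : T, robber_reach C r r' ->
               r' = c \/ cops_win k' (c |: C) r'
  end.

Definition cops_have_winning_strategy (k : nat) : Prop :=
  forall r0 : T, cops_win k set0 r0.

End Digraph.

(* Main.v *)
Require Import Defs.
From mathcomp Require Import all_boot.
Set Implicit Arguments. Unset Strict Implicit. Unset Printing Implicit Defensive.

Section Proof.
Variables (T : finType) (e : rel T).

Lemma connect_inv (f : rel T) (B : T -> bool) x y :
  (forall a b, B a -> f a b -> B b) -> B x -> connect f x y -> B y.
Proof.
move=> H Bx /connectP [p pth ->]; elim: p x Bx pth => //= z p IH x Bx /andP [fxz pth].
exact: IH (H _ _ Bx fxz) pth.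
Qed.

Definition reachS (S : {set T}) r := [set y | reachIn e S r y].

Lemma reachS_refl (S : {set T}) (r : T) : r \in reachS S r.
Proof. by rewrite inE /reachIn connect0. Qed.

Lemma reachS_sub (S : {set T}) (r : T) : r \in S -> reachS S r \subset S.
Proof.
move=> rS; apply/subsetP => y; rewrite inE /reachIn.
apply: (@connect_inv _ (fun z => z \in S)) => // a b _ /and3P [].
by move=> _ ->.
Qed.

Lemma reachS_mono (X Y : {set T}) (r : T) : X \subset Y -> reachS X r \subset reachS Y r.
Proof.
move=> sXY; apply/subsetP => y; rewrite !inE /reachIn.
apply: connect_sub => a b /= /and3P [aX bX eab]; apply: connect1 => /=.
by rewrite (subsetP sXY _ aX) (subsetP sXY _ bX) eab.
Qed.

Fixpoint win (k : nat) (X : {set T}) : Prop :=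
  match k with
  | 0 => False
  | k'.+1 => exists c : T, forall r', r' \in X -> r' <> c ->
                win k' (reachS (X :\ c) r')
  end.

Lemma win_mono k (X Y : {set T}) : X \subset Y -> win k Y -> win k X.
Proof.
elim: k X Y => [//|k IH] X Y sXY [c H]; exists c => r' r'X ne.
apply: IH (H r' (subsetP sXY _ r'X) ne).
apply: reachS_mono; exact: setSD.
Qed.

Lemma win_small (x0 : T) k (X : {set T}) : #|X| < k -> win k X.
Proof.
elim: k X => [//|k IH] X; rewrite ltnS => hX.
case: (pickP (fun x => x \in X)) => [c cX | X0].
- exists c => r' r'X ne; apply: IH.
  have r'Xc: r' \in X :\ c by rewrite !inE r'X andbT; apply/eqP.
  apply: leq_trans hX.
  rewrite (cardsD1 c X) cX add1n ltnS.
  apply: subset_leq_card; exact: reachS_sub r'Xc.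
- exists x0 => r' r'X; by move: (X0 r') => /=; rewrite r'X.
Qed.

Lemma reach_step (C : {set T}) (r c r' : T) : r \notin C -> r' \in reachS (~: C) r -> r' != c ->
  reachS (~: (c |: C)) r' = reachS (reachS (~: C) r :\ c) r'.
Proof.
move=> rC r'X ne.
have sX : reachS (~: C) r \subset ~: C by apply: reachS_sub; rewrite inE.
apply/setP => y; rewrite !inE /reachIn; apply/idP/idP.
- move=> H.
  have : (y \in reachS (~: C) r :\ c) && reachIn e (reachS (~: C) r :\ c) r' y.
    apply: (@connect_inv _ (fun z => (z \in reachS (~: C) r :\ c)
                   && reachIn e (reachS (~: C) r :\ c) r' z) r' y _ _ H).
    + move=> a b /andP [aX ha] /and3P [aC bC eab].
      move: bC; rewrite !inE negb_or => /andP [bc bC].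
      have aC' : a \in ~: C by move: aC; rewrite !inE negb_or => /andP [].
      move: (aX); rewrite !inE => /andP [ac ar].
      have br : reachIn e (~: C) r b.
        apply: connect_trans ar (connect1 _) => /=; by rewrite aC' inE bC eab.
      rewrite bc br /=; apply: connect_trans ha (connect1 _) => /=.
      by rewrite aX !inE bc br eab.
    + by rewrite in_setD1 ne r'X /reachIn connect0.
  by case/andP.
- apply: connect_sub => a b /= /and3P [aX bX eab]; apply: connect1 => /=.
  move: aX bX; rewrite !in_setD1 => /andP [ac aX] /andP [bc bX].
  have := subsetP sX _ aX; have := subsetP sX _ bX; rewrite !inE => bC aC.
  by rewrite !negb_or ac bc aC bC eab.
Qed.

Lemma rr_iff (C : {set T}) (x y : T) : robber_reach e C x y = reachIn e (~: C) x y.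
Proof. rewrite /robber_reach /reachIn; apply: eq_connect => a b /=; by rewrite !inE. Qed.

Lemma cops_winE k (C : {set T}) (r : T) : r \notin C ->
  (cops_win e k C r <-> win k (reachS (~: C) r)).
Proof.
elim: k C r => [//|k IH] C r rC /=.
have sX : reachS (~: C) r \subset ~: C by apply: reachS_sub; rewrite inE.
split=> [[c H]|[c H]]; exists c => r'.
- move=> r'X ne.
  have rr : robber_reach e C r r' by rewrite rr_iff -inE.
  case: (H r' rr) => // hw.
  have ne' : r' != c by apply/eqP.
  rewrite -reach_step //; apply/IH => //.
  have := subsetP sX _ r'X; rewrite !inE negb_or ne' => -> //.
- move=> rr; case: (eqVneq r' c) => [->|ne]; [by left| right].
  have r'X : r' \in reachS (~: C) r by rewrite inE -rr_iff.
  apply/IH; last first.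
    rewrite (reach_step rC r'X ne); apply: H => //; by apply/eqP.
  have := subsetP sX _ r'X; rewrite !inE negb_or ne => -> //.
Qed.

Lemma frag_sub (S R : {set T}) : R \in fragments e S -> R \subset S.
Proof. by rewrite inE => /andP [/andP [] ]. Qed.

Lemma frag_max (S R R' : {set T}) : R \in fragments e S -> rooted_in e S R' -> R \subset R' -> R' = R.
Proof.
rewrite inE => /andP [_ /forallP H] r' s; apply/eqP.
move/implyP: (H R'); apply; by rewrite r' s.
Qed.

Lemma frag_lt (S R : {set T}) : #|fragments e S| != 1 -> R \in fragments e S -> #|R| < #|S|.
Proof.
move=> n1 RF; rewrite ltnNge; apply: contra n1 => hS.
have RS : R = S by apply/eqP; rewrite eqEcard frag_sub.
have rS : rooted_in e S S by move: RF; rewrite inE RS => /andP [].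
apply/cards1P; exists S; apply/setP => R'; rewrite in_set1.
apply/idP/eqP => [R'F | ->].
- by rewrite (frag_max R'F rS (frag_sub R'F)).
- by rewrite -{1}RS.
Qed.

Lemma frag_exists (S R : {set T}) : rooted_in e S R -> exists2 F, F \in fragments e S & R \subset F.
Proof.
move=> rR.
have P0 : (fun F : {set T} => rooted_in e S F && (R \subset F)) R by rewrite /= rR subxx.
case: (@arg_maxnP _ R (fun F : {set T} => rooted_in e S F && (R \subset F)) (fun F : {set T} => #|F|) P0) => F /andP [rF sRF] Fmax.
exists F => //; rewrite inE /is_fragment rF /=; apply/forallP => R'; apply/implyP => /andP [rR' sFR'].
rewrite eq_sym eqEcard sFR' /=; apply: Fmax; by rewrite /= rR' (subset_trans sRF sFR').
Qed.

Lemma ddp_fuel n m (S : {set T}) : #|S| <= n -> #|S| <= m -> ddp_aux e n S = ddp_aux e m S.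
Proof.
elim: n m S => [|n IH] [|m] S /=.
- done.
- by rewrite leqn0 => /eqP S0 _; rewrite S0.
- by move=> _; rewrite leqn0 => /eqP S0; rewrite S0.
- move=> hn hm; case: ifP => // _; case: ifP => Hf.
  + congr _.+1; apply: eq_bigr => v vS; apply: IH.
    * by move: hn; rewrite (cardsD1 v S) vS.
    * by move: hm; rewrite (cardsD1 v S) vS.
  + apply: eq_bigr => R RF; have := frag_lt (negbT Hf) RF.
    by move=> h; apply: IH; rewrite -ltnS; apply: leq_trans h _.
Qed.

Lemma ddp_fuel' n (S : {set T}) : #|S| <= n -> ddp_aux e n S = ddp_set e S.
Proof. by move=> h; apply: ddp_fuel. Qed.

Lemma ddp_setE n (S : {set T}) : #|S| = n.+1 -> 1 < #|S| -> ddp_set e S =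
  if #|fragments e S| == 1 then (\big[minn/#|S|]_(v in S) ddp_set e (S :\ v)).+1
  else \max_(R in fragments e S) ddp_set e R.
Proof.
move=> Es h; rewrite /ddp_set {1}Es /= leqNgt h /=.
case: ifP => Hf.
- congr _.+1; apply: eq_bigr => v vS; apply: ddp_fuel'.
  by move: Es; rewrite (cardsD1 v S) vS add1n => [[->]].
- apply: eq_bigr => R RF; apply: ddp_fuel'.
  by have := frag_lt (negbT Hf) RF; rewrite Es ltnS.
Qed.

Lemma rooted_reach (S : {set T}) (r : T) : r \in S -> rooted_in e S (reachS S r).
Proof.
move=> rS; apply/andP; split; first exact: reachS_sub.
apply/existsP; exists r; rewrite reachS_refl /=; exact: subxx.
Qed.

Lemma reach_restrict (S : {set T}) (r : T) (F : {set T}) : reachS S r \subset F -> reachS S r \subset reachS F r.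
Proof.
move=> sub; apply/subsetP => y; rewrite inE => H.
have : reachIn e S r y && reachIn e F r y.
  apply: (@connect_inv _ (fun z => reachIn e S r z && reachIn e F r z) r y _ _ H).
  + move=> a b /andP [ha hFa] /and3P [aS bS eab].
    have hb : reachIn e S r b.
      by apply: connect_trans ha (connect1 _) => /=; rewrite aS bS eab.
    rewrite hb /=; apply: connect_trans hFa (connect1 _) => /=.
    by rewrite (subsetP sub a) ?(subsetP sub b) ?inE // eab.
  + by rewrite /reachIn !connect0.
by case/andP => _; rewrite inE.
Qed.

Lemma bigmin_le (S : {set T}) (F : T -> nat) x0 k :
  \big[minn/x0]_(v in S) F v <= k -> x0 <= k \/ exists2 v, v \in S & F v <= k.
Proof.
apply: (big_ind (fun x => x <= k -> x0 <= k \/ exists2 v, v \in S & F v <= k)).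
- by left.
- move=> x y Hx Hy; rewrite geq_min => /orP [/Hx|/Hy] //.
- by move=> v vS h; right; exists v.
Qed.

Lemma bigmin_leF (S : {set T}) (F : T -> nat) x0 v :
  v \in S -> \big[minn/x0]_(i in S) F i <= F v.
Proof.
move=> vS; rewrite -big_filter.
have : v \in [seq i <- index_enum T | i \in S] by rewrite mem_filter vS mem_index_enum.
elim: [seq i <- index_enum T | i \in S] => // w s IH; rewrite inE big_cons geq_min.
by case/orP => [/eqP ->|/IH ->]; rewrite ?leqnn ?orbT.
Qed.

Lemma main (x0 : T) n (S : {set T}) : #|S| <= n -> forall k,
  (forall r, r \in S -> win k (reachS S r)) <-> ddp_set e S <= k.
Proof.
elim: n S => [|n IH] S hS k.
  have S0 : #|S| = 0 by apply/eqP; rewrite -leqn0.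
  rewrite /ddp_set S0 /=; split => // _ r.
  by move/eqP: S0; rewrite cards_eq0 => /eqP ->; rewrite inE.
case: (ltnP 1 #|S|) => h1; last first.
  case: (posnP #|S|) => S0.
    rewrite /ddp_set S0 /=; split => // _ r.
    by move/eqP: S0; rewrite cards_eq0 => /eqP ->; rewrite inE.
  have S1 : #|S| = 1 by apply/eqP; rewrite eqn_leq h1 S0.
  have ->: ddp_set e S = 1 by rewrite /ddp_set S1 /= S1.
  move/eqP: S1 => /cards1P [v Sv]; subst S.
  split.
  - case: k => [|k] H //; by have := H v (set11 v).
  - case: k => [//|k] _ r; rewrite in_set1 => /eqP ->; exists v => r' r'X ne.
    have := subsetP (reachS_sub (set11 v)) _ r'X; rewrite in_set1 => /eqP //.
have Es : #|S| = (#|S|.-1).+1 by rewrite prednK // ltnW.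
rewrite (ddp_setE Es h1); case: ifP => hF.
-
  case/cards1P: hF => F FE.
  have FF : F \in fragments e S by rewrite FE set11.
  have SF : S \subset F.
    apply/subsetP => v vS.
    have rv : rooted_in e S [set v].
      apply/andP; split; first by rewrite sub1set.
      apply/existsP; exists v; rewrite set11 /=; apply/subsetP => y.
      by rewrite !inE => /eqP ->; rewrite /reachIn connect0.
    case: (frag_exists rv) => G; rewrite FE in_set1 => /eqP -> .
    by rewrite sub1set.
  move: (FF); rewrite inE => /andP [/andP [FS /existsP [s /andP [sF Fs]]] _].
  have sS : s \in S by apply: (subsetP FS).
  have SR : S \subset reachS S s by apply: subset_trans SF Fs.
  have hSv : forall v, v \in S -> #|S :\ v| <= n.
    by move=> v vS; move: hS; rewrite (cardsD1 v S) vS.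
  split.
  + move=> H; have := win_mono SR (H s sS).
    case: k {H} => [//|k] [c Hc].
    have [v vS vc] : exists2 v, v \in S & (c \in S -> v = c).
      by case: (boolP (c \in S)) => cS; [exists c | exists s].
    have sub : S :\ v \subset S :\ c.
      apply/subsetP => y; rewrite !inE => /andP [yv yS]; rewrite yS andbT.
      case: (boolP (c \in S)) => cS; first by rewrite -(vc cS).
      by apply/eqP => yc; rewrite -yc yS in cS.
    have hv : ddp_set e (S :\ v) <= k.
      apply/(IH _ (hSv v vS) k) => r; rewrite !inE => /andP [rv rS].
      apply: (win_mono (reachS_mono r sub)); apply: Hc => // rc.
      case: (boolP (c \in S)) => cS; first by move: rv; rewrite (vc cS) rc eqxx.
      by rewrite -rc rS in cS.
    by rewrite ltnS; apply: leq_trans (bigmin_leF _ _ vS) hv.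
  + case: k => [//|k]; rewrite ltnS => /bigmin_le H r rS.
    apply: (win_mono (reachS_sub rS)).
    case: H => [hk | [v vS hv]].
      by apply: (win_small x0); rewrite ltnS.
    have W := (IH _ (hSv v vS) k).2 hv.
    exists v => r' r'S ne; apply: W; rewrite !inE r'S andbT; by apply/eqP.
-
  have hR : forall R, R \in fragments e S -> #|R| <= n.
    by move=> R RF; have := frag_lt (negbT hF) RF => h; rewrite -ltnS; apply: leq_trans h hS.
  split.
  + move=> H; apply/bigmax_leqP => R RF; apply/(IH R (hR R RF) k) => r rR.
    have RS := frag_sub RF.
    apply: win_mono (H r (subsetP RS r rR)); exact: reachS_mono.
  + move/bigmax_leqP => H r rS.
    case: (frag_exists (rooted_reach rS)) => F FF sub.
    have rF : r \in F by apply: (subsetP sub); exact: reachS_refl.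
    have W := (IH F (hR F FF) k).2 (H F FF) r rF.
    exact: win_mono (reach_restrict sub) W.
Qed.

End Proof.

Theorem theorem2p1 (T : finType) (e : rel T) (k : nat) :
  0 < #|T| -> 0 < k ->
  (cops_have_winning_strategy e k <-> ddp e <= k).
Proof.
move=> hT _; case/card_gt0P: hT => x0 _.
have M := main e x0 (leqnn #|[set: T]|) k.
rewrite /cops_have_winning_strategy /ddp.
have E : forall r, cops_win e k set0 r <-> win e k (reachS e [set: T] r).
  by move=> r; rewrite -setC0; apply: cops_winE; rewrite inE.
split => [H | H r0].
- apply/M => r _; exact/E.
- apply/E; exact: (M.2 H).
Qed.
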